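(* Fix $\varepsilon>0$ and a request sequence in which every request has infinite duration. For a VNF $v$, a node $i$ and a latency range $L_j$, let $\Lambda^v_{i,j}$ be the total load of all jobs $(r,v)$ associated with $L_j$ that c-REShare$(\varepsilon)$ handles in node $i$. Then the number of VMs used by c-REShare$(\varepsilon)$ to handle $\Lambda^v_{i,j}$ is at most $\frac{2\Lambda^v_{i,j}}{\lambda_{\min}(1+\varepsilon)^j}+1$.
   Context: Network: a layered graph of nodes (datacenters); a node is at layer $\ell\ge0$ if its distance from the closest leaf is $\ell$. Every node can host arbitrarily many virtual machines (VMs). Each VM $b$ runs exactly one VNF $v$ from a finite set $\mathcal V$, has maximum computing capability $\bar\mu>0$ and allocated capability $\mu_b\le\bar\mu$. Each VNF $v$ has complexity $\theta_v\in(0,1]$. Requests: requests $r$ arrive online; each has a set $\mathcal V_r\subseteq\mathcal V$ of VNFs, arrival time, duration $\tau_r$, traffic load $\lambda_r\ge\lambda_{\min}$ where $\lambda_{\min}=\inf_r\lambda_r>0$ is known in advance, end-to-end delay target $D_r$. For $v\in\mathcal V_r$, $(r,v)$ is a job. For a VM $b$ running $v$, $\Lambda(b)$ is the total load of the jobs on $b$, and each job on $b$ experiences processing latency $1/(\mu_b-\theta_v\Lambda(b))$. Forwarding latency from a leaf to layer $\ell$ is $d_\ell$, strictly increasing in $\ell$. Fair delay allocation: $M_{r,v}=1/(\bar\mu-\theta_v\lambda_r)$; $\ell^*(r)$ is the highest layer $\ell$ with $d_\ell+\sum_{v\in\mathcal V_r}M_{r,v}\le D_r$; $D_r^v=\frac{M_{r,v}}{\sum_{u\in\mathcal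 V_r}M_{r,u}}(D_r-d_{\ell^*(r)})$. Latency ranges: for $\varepsilon>0$, $L_0=[\frac{1}{\bar\mu-\lambda_{\min}},\frac{1}{\bar\mu-\lambda_{\min}(1+\varepsilon)}]$, $L_j=(\frac{1}{\bar\mu-\lambda_{\min}(1+\varepsilon)^j},\frac{1}{\bar\mu-\lambda_{\min}(1+\varepsilon)^{j+1}}]$ for $j\ge1$ (indices with $\lambda_{\min}(1+\varepsilon)^{j+1}<\bar\mu$); job $(r,v)$ is associated with $L_j$ if $D_r^v\in L_j$. Algorithm c-REShare$(\varepsilon)$: on arrival of $r$, compute $\ell^*(r)$ and choose a node $i^*$ at layer $\ell^*(r)$. For each $v\in\mathcal V_r$, with $j$ such that $D_r^v\in L_j$: a VM $b$ in $i^*$ running $v$ and hosting jobs associated with $L_j$ is viable if $\frac{1}{\bar\mu-\theta_v(\Lambda(b)+\lambda_r)}\le D_r^v$ and $\frac{1}{\bar\mu-\theta_v(\Lambda(b)+\lambda_r)}\le D_{r'}^v$ for every job $(r',v)$ already on $b$. If viable VMs exist, $(r,v)$ is placed on the viable VM with the largest $\Lambda(b)$, whose capability is set to $\theta_v\Lambda(b)+1/\min_{(r',v)\in b}D_{r'}^v$ (including the new job); otherwise a new VM running $v$ is opened in $i^*$ with capability $\theta_v\lambda_r+1/D_r^v$ and $(r,v)$ is placed on it. *)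

(* Defs.v *)
From Stdlib Require List.
From HB Require Import structures.
From mathcomp Require Import all_boot all_order all_algebra.
Set Implicit Arguments. Unset Strict Implicit. Unset Printing Implicit Defensive.
Import Order.TTheory GRing.Theory Num.Theory.
Local Open Scope ring_scope.

(* A request: its set of VNFs, traffic load lambda_r, delay target D_r.
   Arrival times and durations are irrelevant: all durations are infinite,
   so requests never depart and are processed in arrival order. *)
Record request (V R : Type) := Request { rvnfs : seq V; rlam : R; rD : R }.

(* A VM: hosting node, the VNF it runs, and its jobs as pairs
   (traffic load lambda_r, per-VNF delay budget D_r^v). *)
Record vm (N V R : Type) := VM { vnode : N; vvnf : V; vjobs : seq (R * R) }.

Section CREShare.
Variables (R : realFieldType) (N V : eqType).
Variables (mubar lmin eps : R) (theta : V -> R) (d : nat -> R)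
          (Lmax : nat) (layer : N -> nat).

Local Notation request := (request V R).
Local Notation vm := (vm N V R).

Definition Mrv (r : request) (v : V) : R := (mubar - theta v * rlam r)^-1.
Definition sumM (r : request) : R := \sum_(u <- rvnfs r) Mrv r u.
Definition lstar (r : request) : nat :=
  \max_(l < Lmax.+1 | d l + sumM r <= rD r) (l : nat).
Definition Drv (r : request) (v : V) : R :=
  Mrv r v / sumM r * (rD r - d (lstar r)).

Definition range_lo (j : nat) : R := (mubar - lmin * (1 + eps) ^+ j)^-1.
Definition range_hi (j : nat) : R := (mubar - lmin * (1 + eps) ^+ j.+1)^-1.
Definition range_ok (j : nat) : bool := lmin * (1 + eps) ^+ j.+1 < mubar.
Definition inL (j : nat) (x : R) : bool :=
  [&& range_ok j, (if j == 0%N then range_lo j <= x else range_lo j < x)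
    & x <= range_hi j].

Definition load (b : vm) : R := \sum_(p <- vjobs b) p.1.
Definition latency (b : vm) (v : V) (lam : R) : R :=
  (mubar - theta v * (load b + lam))^-1.

Definition viable (i : N) (v : V) (lam D : R) (b : vm) : Prop :=
  [/\ vnode b = i, vvnf b = v,
      vjobs b <> [::]
    & exists j, inL j D /\ all (fun p => inL j p.2) (vjobs b)] /\
  [/\ 0 < mubar - theta v * (load b + lam),
      latency b v lam <= D
    & all (fun p => latency b v lam <= p.2) (vjobs b)].

Definition add_job (b : vm) (lam D : R) : vm :=
  VM (vnode b) (vvnf b) (rcons (vjobs b) (lam, D)).
Definition open_vm (i : N) (v : V) (lam D : R) : vm := VM i v [:: (lam, D)].

Definition place (s s' : seq vm) (i : N) (v : V) (lam D : R) : Prop :=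
  (exists s1 b s2,
      [/\ s = s1 ++ b :: s2, viable i v lam D b,
          (forall b', Stdlib.Lists.List.In b' (s1 ++ s2) -> viable i v lam D b' ->
                      load b' <= load b)
        & s' = s1 ++ add_job b lam D :: s2])
  \/ ((forall b, Stdlib.Lists.List.In b s -> ~ viable i v lam D b)
      /\ s' = rcons s (open_vm i v lam D)).

Inductive place_all : seq vm -> seq vm -> N -> request -> seq V -> Prop :=
| place_all_nil s i r : place_all s s i r [::]
| place_all_cons s s1 s2 i r v vs :
    place s s1 i v (rlam r) (Drv r v) -> place_all s1 s2 i r vs ->
    place_all s s2 i r (v :: vs).

(* run rs s : after processing the request sequence rs (in order),
   c-REShare(eps) may be in VM configuration s (node choice i* at layer
   l*(r) and tie-breaking are arbitrary). *)
Inductive run : seq request -> seq vm -> Prop :=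
| run_nil : run [::] [::]
| run_snoc rs s s' r i :
    run rs s -> layer i = lstar r -> place_all s s' i r (rvnfs r) ->
    run (rcons rs r) s'.

Definition admissible (r : request) : bool :=
  [&& uniq (rvnfs r), lmin <= rlam r,
      all (fun v => theta v * rlam r < mubar) (rvnfs r)
    & d 0 + sumM r <= rD r].

Definition handled_load (s : seq vm) (i : N) (v : V) (j : nat) : R :=
  \sum_(b <- s | (vnode b == i) && (vvnf b == v))
     \sum_(p <- vjobs b | inL j p.2) p.1.

Definition used_vms (s : seq vm) (i : N) (v : V) (j : nat) : nat :=
  count (fun b => [&& vnode b == i, vvnf b == v & has (fun p => inL j p.2) (vjobs b)]) s.

End CREShare.

(* Main.v *)
Require Import Defs.
From mathcomp Require Import all_boot all_order all_algebra.
From mathcomp Require Import ring lra.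
Set Implicit Arguments. Unset Strict Implicit. Unset Printing Implicit Defensive.
Import Order.TTheory GRing.Theory Num.Theory.
Local Open Scope ring_scope.

Section Aux.
Variables (R : realFieldType) (N V : eqType) (mubar lmin eps : R) (theta : V -> R).
Hypotheses (heps : 0 < eps) (hmu : 0 < mubar) (hlmin : 0 < lmin).
Local Ltac lra' := move: (heps) (hmu) (hlmin); lra.

Lemma pow_pos n : 0 < (1 + eps) ^+ n.
Proof. have h : 0 < 1 + eps by lra'. exact: exprn_gt0. Qed.

Lemma pow_mono m n : (m <= n)%N -> (1 + eps) ^+ m <= (1 + eps) ^+ n.
Proof. by move=> h; rewrite ler_eXn2l //; lra'. Qed.

Lemma ok_den n : range_ok mubar lmin eps n -> 0 < mubar - lmin * (1 + eps) ^+ n.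
Proof.
rewrite /range_ok => h.
have := pow_mono (leqnSn n) => hm.
have : lmin * (1 + eps) ^+ n <= lmin * (1 + eps) ^+ n.+1 by rewrite ler_pM2l.
lra'.
Qed.

Lemma ok_le m n : (m <= n)%N -> range_ok mubar lmin eps n -> range_ok mubar lmin eps m.
Proof.
rewrite /range_ok => hmn h.
have : lmin * (1 + eps) ^+ m.+1 <= lmin * (1 + eps) ^+ n.+1.
  by rewrite ler_pM2l // pow_mono.
lra'.
Qed.

Lemma lo_mono m n : (m <= n)%N -> range_ok mubar lmin eps n ->
  range_lo mubar lmin eps m <= range_lo mubar lmin eps n.
Proof.
move=> hmn hn; rewrite /range_lo.
have hm := ok_den (ok_le hmn hn). have hn' := ok_den hn.
rewrite lef_pV2 ?posrE //.
have : lmin * (1 + eps) ^+ m <= lmin * (1 + eps) ^+ n by rewrite ler_pM2l // pow_mono.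
lra'.
Qed.

Lemma inL_lo j x : inL mubar lmin eps j x -> range_lo mubar lmin eps j <= x.
Proof. by case/and3P => _ h _; case: (j == 0%N) h => // /ltW. Qed.

Lemma inL_uniq_lt j1 j2 x : (j1 < j2)%N -> inL mubar lmin eps j1 x -> inL mubar lmin eps j2 x -> False.
Proof.
move=> hlt /and3P [_ _ h1] /and3P [ok2 h2 _].
have hm := lo_mono hlt ok2.
case: j2 hlt ok2 h2 hm => // j2' hlt ok2 h2 hm.
move: h1 h2 hm; rewrite /range_hi /range_lo /=. lra'.
Qed.

Lemma inL_uniq j1 j2 x : inL mubar lmin eps j1 x -> inL mubar lmin eps j2 x -> j1 = j2.
Proof.
move=> h1 h2; case: (ltngtP j1 j2) => // hlt.
- by case: (inL_uniq_lt hlt h1 h2).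
- by case: (inL_uniq_lt hlt h2 h1).
Qed.


Lemma pw_mono (r : rel R) (l1 l2 : seq R) x y :
  (forall a b c, r a b -> b <= c -> r a c) ->
  (forall a b c, r b a -> b <= c -> r c a) ->
  pairwise r (l1 ++ x :: l2) -> x <= y -> pairwise r (l1 ++ y :: l2).
Proof.
move=> m1 m2; elim: l1 => [|a l1 IH] /=.
  case/andP => h1 -> hxy; rewrite andbT.
  by apply: sub_all h1 => z hz; apply: m2 hz hxy.
case/andP => h1 h2 hxy; rewrite IH // andbT.
move: h1; rewrite !all_cat /= => /and3P [-> h h'] /=; rewrite h' andbT.
exact: m1 h hxy.
Qed.

Lemma final_aux (X : R) (l : seq R) : forall a, 0 <= a -> all (fun x => 0 <= x) l ->
   all (fun y => X < a + y) l ->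
   pairwise (fun x y => X < x + y) l -> (size l)%:R * X <= a + 2 * \sum_(x <- l) x.
Proof.
elim: l => [|b l IH] a ha /=; first by rewrite big_nil mul0r; lra'.
case/andP => hb hl /andP [hab ha'] /andP [hb' hl'].
have := IH b hb hl hb' hl'.
rewrite big_cons -addn1 natrD mulrDl mul1r.
move: hab; lra'.
Qed.

Lemma final_bound (X : R) (t : seq R) : 0 < X -> all (fun x => 0 <= x) t ->
  pairwise (fun x y => X < x + y) t ->
  (size t)%:R <= 2 * (\sum_(x <- t) x) / X + 1.
Proof.
move=> hX; case: t => [|a l] /=.
  by move=> _ _; rewrite big_nil mulr0 mul0r add0r ler01.
case/andP => ha hl /andP [h1 h2].
have hh := final_aux ha hl h1 h2.
have hs : 0 <= \sum_(x <- l) x by rewrite big_seq sumr_ge0 // => x /(allP hl).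
have hd : (size l)%:R <= 2 * (\sum_(x <- a :: l) x) / X.
  by rewrite ler_pdivlMr // big_cons; lra'.
rewrite -addn1 natrD; move: hd; lra'.
Qed.

Variables (i : N) (v : V) (j : nat).
Hypothesis hth : forall u, 0 < theta u <= 1.
Hypothesis hok : range_ok mubar lmin eps j.

Definition X := lmin * (1 + eps) ^+ j.
Definition Pj (b : vm N V R) : bool :=
  [&& vnode b == i, vvnf b == v, vjobs b != [::]
    & all (fun p => inL mubar lmin eps j p.2) (vjobs b)].
Definition A1 (b : vm N V R) : bool :=
  (vjobs b != [::]) && (has (fun p => inL mubar lmin eps j p.2) (vjobs b)
     ==> all (fun p => inL mubar lmin eps j p.2) (vjobs b)).
Definition A2 (b : vm N V R) : bool := all (fun p => 0 <= p.1) (vjobs b).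
Definition Inv (s : seq (vm N V R)) : Prop :=
  [/\ all A1 s, all A2 s & pairwise (fun x y => X < x + y) (map (@load R N V) (filter Pj s))].

Lemma X_pos : 0 < X.
Proof. by rewrite /X mulr_gt0 // pow_pos. Qed.

Lemma X_lt : X < mubar.
Proof. have := ok_den hok; rewrite /X; lra'. Qed.

Lemma key (y t : R) : 0 < t <= 1 -> 0 <= y ->
  (~~ (0 < mubar - t * y) \/
   exists x, [/\ range_lo mubar lmin eps j <= x, x < (mubar - t * y)^-1 & 0 < mubar - t * y]) ->
  X < y.
Proof.
case/andP => ht0 ht1 hy h.
have hty : t * y <= y by rewrite ler_piMl.
have hd := ok_den hok. have hXl := X_lt.
suff : X < t * y by move: hty; rewrite /X; lra'.
case: h => [|[x [h1 h2 h3]]].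
  by rewrite -leNgt => h; move: hXl; rewrite /X; lra'.
have : (mubar - lmin * (1 + eps) ^+ j)^-1 < (mubar - t * y)^-1.
  by apply: le_lt_trans h2; exact: h1.
rewrite ltf_pV2 ?posrE // /X; lra'.
Qed.

Lemma load_add (b : vm N V R) lam D : load (add_job b lam D) = load b + lam.
Proof. by rewrite /load /add_job /= big_rcons. Qed.

Lemma load_ge0 (b : vm N V R) : A2 b -> 0 <= load b.
Proof. by move=> h; rewrite /load big_seq sumr_ge0 // => p /(allP h). Qed.

Lemma hasall (P : pred (R * R)) l : l != [::] -> all P l -> has P l.
Proof. by case: l => //= a l _ /andP [-> _]. Qed.

Lemma In_all (P : pred (vm N V R)) s : (forall b, List.In b s -> P b) -> all P s.
Proof.
elim: s => //= a s IH h; rewrite h /=; last by left.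
by apply: IH => b hb; apply: h; right.
Qed.

Lemma all_In (P : pred (vm N V R)) s b : all P s -> List.In b s -> P b.
Proof.
elim: s => //= a s IH /andP [ha hs] [<- //|hb]; exact: IH.
Qed.

Lemma place_inv s s' i' v' lam D : 0 <= lam -> Inv s ->
  place mubar lmin eps theta s s' i' v' lam D -> Inv s'.
Proof.
move=> hlam [h1 h2 h3] [[s1 [b [s2 [hs hv _ hs']]]] | [hnv hs']]; subst s'.
- subst s; case: hv => [[hn hvv hne [j' [hD hall]]] _].
  have hne' : vjobs b != [::] by apply/eqP.
  have hall' : all (fun p => inL mubar lmin eps j' p.2) (vjobs (add_job b lam D))
    by rewrite /= all_rcons hD hall.
  have jeq : has (fun p => inL mubar lmin eps j p.2) (vjobs (add_job b lam D)) -> j = j'.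
    case/hasP => p hp hpj. have := allP hall' p hp. exact: inL_uniq.
  have hPj : Pj (add_job b lam D) = Pj b.
    rewrite /Pj /=; case: (vnode b == i) => //=; case: (vvnf b == v) => //=.
    rewrite hne' -size_eq0 size_rcons /= all_rcons.
    apply/idP/idP; first by case/andP.
    move=> ha; rewrite ha andbT.
    have hh : has (fun p => inL mubar lmin eps j p.2) (vjobs (add_job b lam D)).
      by rewrite /= has_rcons hasall ?orbT.
    by rewrite (jeq hh).
  split.
  + move: h1; rewrite !all_cat /= => /and3P [-> _ ->]; rewrite andbT /= /A1 /=.
    rewrite -size_eq0 size_rcons /=; apply/implyP => hh.
    by move: hall'; rewrite -(jeq hh).
  + move: h2; rewrite !all_cat /= => /and3P [-> hb ->]; rewrite andbT /= /A2 /=.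
    by rewrite all_rcons hlam.
  + move: h3; rewrite !filter_cat /= hPj; case: (Pj b) => //=; rewrite !map_cat /= => h.
    apply: (pw_mono _ _ h); first by move=> a0 b0 c0 ? ?; lra'.
      by move=> a0 b0 c0 ? ?; lra'.
    by rewrite load_add; lra'.
- split.
  + by rewrite all_rcons h1 andbT /A1 /=; case: inL.
  + by rewrite all_rcons h2 andbT /A2 /= hlam.
  + rewrite filter_rcons; case hP: (Pj _); last done.
    rewrite map_rcons pairwise_rcons h3 andbT.
    have -> : load (open_vm i' v' lam D) = lam by rewrite /load /= big_cons big_nil addr0.
    rewrite all_map all_filter; apply: In_all => b hb; apply/implyP => hPb /=.
    move: hP; rewrite /Pj /= => /and4P [/eqP ei /eqP ev hDj _].
    subst i' v'.
    have hnv' := hnv b hb.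
    have hA2 := load_ge0 (all_In h2 hb).
    move: (hPb); rewrite /Pj => /and4P [/eqP hbn /eqP hbv hbne hball].
    apply: (key (t := theta v)) => //; first by move: hA2; lra'.
    case: (ltP 0 (mubar - theta v * (load b + lam))) => hd; last by left.
    right.
    case hl: (latency mubar theta b v lam <= D); last first.
      exists D; split => //; first exact: inL_lo.
      by move/negbT: hl; rewrite -ltNge.
    case ha: (all (fun p => latency mubar theta b v lam <= p.2) (vjobs b)).
      exfalso; apply: hnv'; split; last by split.
      split => //; first by apply/eqP.
      by exists j.
    move/negbT: ha; rewrite -has_predC => /hasP [p hp hnp].
    exists p.2; split => //; first by apply: inL_lo; exact: (allP hball p hp).
    by move: hnp; rewrite /= -ltNge.
Qed.

Variables (d : nat -> R) (Lmax : nat) (layer : N -> nat).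

Lemma place_all_inv s s' i' r vs : 0 <= rlam r -> Inv s ->
  place_all mubar lmin eps theta d Lmax s s' i' r vs -> Inv s'.
Proof.
move=> hl hI H; move: hl hI; elim: H => [//|s0 s1 s2 i0 r0 v0 vs0 hp _ IH hl0 hI0].
apply: (IH hl0); exact: place_inv hl0 hI0 hp.
Qed.

Lemma run_inv rs s : all (admissible mubar lmin theta d) rs ->
  run mubar lmin eps theta d Lmax layer rs s -> Inv s.
Proof.
move=> ha H; elim: H ha => [|rs0 s0 s1 r i0 hrun IH hl hp] ha; first by split.
move: ha; rewrite all_rcons => /andP [har hars].
apply: (place_all_inv _ (IH hars) hp).
case/and4P: har => _ h _ _; lra'.
Qed.

Lemma A1_eq b : A1 b ->
  [&& vnode b == i, vvnf b == v & has (fun p => inL mubar lmin eps j p.2) (vjobs b)] = Pj b.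
Proof.
rewrite /A1 /Pj => /andP [hne himp]; rewrite hne /=.
case: (vnode b == i) => //=; case: (vvnf b == v) => //=.
apply/idP/idP; [exact: (implyP himp) | exact: hasall].
Qed.

Lemma used_eq s : all A1 s -> used_vms mubar lmin eps s i v j = size (filter Pj s).
Proof.
rewrite /used_vms; elim: s => //= b s IH /andP [hb hs]; rewrite IH // A1_eq //.
by case: (Pj b).
Qed.

Lemma handled_eq s : all A1 s ->
  handled_load mubar lmin eps s i v j = \sum_(x <- map (@load R N V) (filter Pj s)) x.
Proof.
rewrite /handled_load; elim: s => [|b s IH]; first by rewrite !big_nil.
move=> /= /andP [hb hs]; rewrite big_cons IH //.
have := A1_eq hb.
case hP: (Pj b) => /=.
  rewrite big_cons; case/and3P => -> -> _ /=; congr (_ + _).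
  move: hP; rewrite /Pj => /and4P [_ _ _ hall].
  by rewrite /load -big_filter (all_filterP hall).
case: (vnode b == i) => //=; case: (vvnf b == v) => //= hh.
rewrite -big_filter; move/negbT: hh; rewrite has_filter negbK => /eqP ->.
by rewrite big_nil add0r.
Qed.

End Aux.

Theorem lemma4 (R : realFieldType) (N V : eqType)
  (mubar lmin eps : R) (theta : V -> R) (d : nat -> R)
  (Lmax : nat) (layer : N -> nat)
  (rs : seq (request V R)) (s : seq (vm N V R)) (i : N) (v : V) (j : nat) :
  0 < eps -> 0 < mubar -> 0 < lmin ->
  (forall u, 0 < theta u <= 1) ->
  (forall l, d l < d l.+1) ->
  (forall n, (layer n <= Lmax)%N) ->
  all (admissible mubar lmin theta d) rs ->
  range_ok mubar lmin eps j ->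
  run mubar lmin eps theta d Lmax layer rs s ->
  (used_vms mubar lmin eps s i v j)%:R
    <= 2 * handled_load mubar lmin eps s i v j / (lmin * (1 + eps) ^+ j) + 1.
Proof.
move=> heps hmu hlmin hth _ _ hadm hok hrun.
have [h1 h2 h3] := run_inv heps hmu hlmin i v hth hok hadm hrun.
rewrite (used_eq i v h1) (handled_eq i v h1) -(size_map (@load R N V)).
apply: final_bound => //.
- exact: (X_pos heps hlmin).
- rewrite all_map all_filter; apply: sub_all h2 => b hb; apply/implyP => _.
  exact: load_ge0.
Qed.
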